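(* Let $P$ be a monotone irreducible positive recurrent stochastic kernel on $\mathbb{N}=\{1,2,\dots\}$ with stationary distribution $\pi$. Let $\overleftarrow{P}(x,y)=\pi(x)^{-1}P(y,x)\pi(y)$, $x,y\in\mathbb{N}$, be the time-reversed kernel, $\overleftarrow{X}=(\overleftarrow{X}_n)_{n\ge0}$ the Markov chain with kernel $\overleftarrow{P}$, and for $N\ge1$ let $\overleftarrow{\tau}_{(N)}=\inf\{n\ge0:\overleftarrow{X}_n\ge N\}$. Then $$\forall\, x,y\in\mathbb{N}:\quad \lim_{n,N\to\infty}\mathbb{P}_x\big(\overleftarrow{X}_n=y\,\big|\,\overleftarrow{\tau}_{(N)}>n\big)=\pi(y),$$ the limit being joint in $n$ and $N$.
   Context: A stochastic kernel $P$ on $\mathbb{N}$ is monotone if for every $y$ the map $x\mapsto\sum_{z\le y}P(x,z)$ is decreasing in $x$. $\pi$ is the (strictly positive) stationary probability of $P$. $\mathbb{P}_x$ denotes the law of the chain started at $x$. *)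

(* Defs.v *)
From HB Require Import structures.
From mathcomp Require Import all_boot all_order all_algebra.
From mathcomp Require Import all_classical all_reals all_analysis.
Set Implicit Arguments. Unset Strict Implicit. Unset Printing Implicit Defensive.
Import Order.TTheory GRing.Theory Num.Theory numFieldNormedType.Exports.
Local Open Scope classical_set_scope.
Local Open Scope ring_scope.

(* State space: the countable set nat (the paper's {1,2,...}, relabelled
   by k |-> k-1).  A kernel is a function P : nat -> nat -> R. *)

Definition stochastic (R : realType) (P : nat -> nat -> R) : Prop :=
  (forall x y, 0 <= P x y) /\
  (forall x, series (fun y => P x y) @ \oo --> (1:R)).

Definition monotone_kernel (R : realType) (P : nat -> nat -> R) : Prop :=
  forall y x1 x2, (x1 <= x2)%N ->
    \sum_(0 <= z < y.+1) P x2 z <= \sum_(0 <= z < y.+1) P x1 z.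

Definition irreducible (R : realType) (P : nat -> nat -> R) : Prop :=
  forall x y, exists s : seq nat,
    path (fun a b => 0 < P a b) x s /\ last x s = y.

(* Taboo probabilities: taboo P x k z = P_x(X_{k+1} = z, X_j <> x for 1<=j<=k). *)
Fixpoint taboo (R : realType) (P : nat -> nat -> R) (x : nat) (k : nat)
    (z : nat) : R :=
  match k with
  | 0 => P x z
  | k'.+1 => limn (series (fun w => if w == x then 0 else taboo P x k' w * P w z))
  end.

(* First return probabilities: P_x(T_x^+ = k+1), T_x^+ = inf{n >= 1 : X_n = x}. *)
Definition first_return (R : realType) (P : nat -> nat -> R) (x k : nat) : R :=
  taboo P x k x.

Definition positive_recurrent_state (R : realType) (P : nat -> nat -> R)
    (x : nat) : Prop :=
  (series (fun k => first_return P x k) @ \oo --> (1:R)) /\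
  cvgn (series (fun k => (k.+1)%:R * first_return P x k)).

Definition positive_recurrent (R : realType) (P : nat -> nat -> R) : Prop :=
  forall x, positive_recurrent_state P x.

Definition stationary_distribution (R : realType) (P : nat -> nat -> R)
    (pi : nat -> R) : Prop :=
  (forall x, 0 <= pi x) /\
  (series pi @ \oo --> (1:R)) /\
  (forall y, series (fun x => pi x * P x y) @ \oo --> pi y).

Definition reversed_kernel (R : realType) (P : nat -> nat -> R) (pi : nat -> R)
    : nat -> nat -> R :=
  fun x y => (pi x)^-1 * P y x * pi y.

(* killed Q N n x y = P_x(X_n = y, X_0 < N, ..., X_n < N) for the chain with
   kernel Q, i.e. P_x(X_n = y, tau_(N) > n), tau_(N) = inf{n >= 0 : X_n >= N}. *)
Fixpoint killed (R : realType) (Q : nat -> nat -> R) (N n x y : nat) : R :=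
  match n with
  | 0 => if (x < N)%N && (y == x) then 1 else 0
  | n'.+1 => if (y < N)%N then \sum_(0 <= z < N) killed Q N n' x z * Q z y else 0
  end.

Definition cond_killed (R : realType) (Q : nat -> nat -> R) (N n x y : nat) : R :=
  killed Q N n x y / \sum_(0 <= z < N) killed Q N n x z.

(* Main.v *)
Require Import Defs.
From HB Require Import structures.
From mathcomp Require Import all_boot all_order all_algebra.
From mathcomp Require Import all_classical all_reals all_analysis.
From mathcomp Require Import ring lra zify.
Import Order.TTheory GRing.Theory Num.Theory numFieldNormedType.Exports.
Local Open Scope classical_set_scope.
Local Open Scope ring_scope.
Section S.
Variable R : realType.
Implicit Types u : nat -> R.

Lemma ser_le u l : (forall k, 0 <= u k) -> series u @ \oo --> l ->
  forall n, \sum_(0 <= k < n) u k <= l.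
Proof.
move=> u0 H n.
have nd : nondecreasing_seq (series u).
  by apply/nondecreasing_seqP => m; rewrite /series /= big_nat_recr //= lerDl.
have := nondecreasing_cvgn_le nd (cvgP _ H) n.
by rewrite (cvg_lim _ H).
Qed.

Lemma ser_ge u l eps : series u @ \oo --> l -> 0 < eps ->
  exists n, l - eps < \sum_(0 <= k < n) u k.
Proof.
move=> H e0; move/cvgrPdist_lt: H => /(_ eps e0).
move=> [N _ HN]; exists N; have := HN N (leqnn N).
rewrite /series /= => h; rewrite ltrBlDr -ltrBlDl.
by rewrite (le_lt_trans (ler_norm _)).
Qed.

Lemma sum_ge_term (F : nat -> R) N i : (forall j, 0 <= F j) -> (i < N)%N ->
  F i <= \sum_(0 <= j < N) F j.
Proof.
move=> F0 iN; rewrite (bigD1_seq i) ?mem_index_iota ?iota_uniq //=.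
by rewrite lerDl sumr_ge0.
Qed.

Lemma sum_le_ext (F : nat -> R) L N : (forall j, 0 <= F j) -> (L <= N)%N ->
  \sum_(0 <= j < L) F j <= \sum_(0 <= j < N) F j.
Proof.
move=> F0 LN; rewrite (big_cat_nat (leq0n L) LN) /= lerDl sumr_ge0 //.
Qed.

Lemma abel (p phi : nat -> R) n :
  \sum_(0 <= w < n.+1) p w * phi w =
  \sum_(0 <= w < n) (\sum_(0 <= v < w.+1) p v) * (phi w - phi w.+1)
  + (\sum_(0 <= v < n.+1) p v) * phi n.
Proof.
elim: n => [|n IH]; first by rewrite big_nat1 big_geq // big_nat1 add0r.
rewrite (big_nat_recr n.+1) //= IH.
rewrite (big_nat_recr n 0 (fun w => (\sum_(0 <= v < w.+1) p v) * (phi w - phi w.+1))) //=.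
rewrite (big_nat_recr n.+1 0 p) //=.
set a := \sum_(0 <= w < n) _; set b := \sum_(0 <= v < n.+1) p v.
ring.
Qed.

Lemma abel_le (p1 p2 phi : nat -> R) n :
  (forall w, (w <= n)%N -> \sum_(0 <= v < w.+1) p2 v <= \sum_(0 <= v < w.+1) p1 v) ->
  (forall w, (w < n)%N -> phi w.+1 <= phi w) -> 0 <= phi n ->
  \sum_(0 <= w < n.+1) p2 w * phi w <= \sum_(0 <= w < n.+1) p1 w * phi w.
Proof.
move=> Hp Hphi H0; rewrite !abel; apply: lerD.
  apply: ler_sum_nat => w /andP[_ wn]; apply: ler_wpM2r.
    by rewrite subr_ge0 Hphi.
  by apply: Hp; rewrite ltnW.
by apply: ler_wpM2r => //; apply: Hp.
Qed.
End S.
Fixpoint Kf {R : realType} (P : nat -> nat -> R) (N n z a : nat) : R :=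
  match n with
  | 0 => if (z < N)%N && (a == z) then 1 else 0
  | n'.+1 => if (z < N)%N then \sum_(0 <= w < N) P z w * Kf P N n' w a else 0
  end.

Definition G {R : realType} (P : nat -> nat -> R) N n k z : R :=
  \sum_(0 <= a < k) Kf P N n z a.

Fixpoint V {R : realType} (P : nat -> nat -> R) (N m z : nat) : R :=
  match m with
  | 0 => if z == 0%N then 1 else 0
  | m'.+1 => if z == 0%N then 1 else
             if (z < N)%N then \sum_(0 <= w < N) P z w * V P N m' w else 0
  end.

Definition E {R : realType} (P : nat -> nat -> R) (pi : nat -> R) N n a : R :=
  \sum_(0 <= z < N) pi z * Kf P N n z a.

Lemma all_lt_max (l : seq nat) N : (foldr maxn 0 l < N)%N -> all (fun v => (v < N)%N) l.
Proof.
elim: l => [//|a l IH] /=; rewrite gtn_max => /andP[-> /IH] //.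
Qed.

Fixpoint tk {R : realType} (P : nat -> nat -> R) (N : nat) (mu : nat -> R) (k z : nat) : R :=
  match k with
  | 0 => if (z < N)%N then mu z else 0
  | k'.+1 => if (z < N)%N then
      \sum_(0 <= w < N) (if w == 0%N then 0 else tk P N mu k' w * P w z) else 0
  end.

Definition W {R : realType} (P : nat -> nat -> R) N m z : R :=
  \sum_(0 <= w < N) P z w * V P N m w.

Lemma fin_common (Q : nat -> nat -> Prop) L :
  (forall w M M', (M <= M')%N -> Q w M -> Q w M') ->
  (forall w, (w < L)%N -> exists M, Q w M) -> exists M, forall w, (w < L)%N -> Q w M.
Proof.
move=> Qm; elim: L => [|L IH] H; first by exists 0%N.
have [M1 H1] : exists M, forall w, (w < L)%N -> Q w M.
  by apply: IH => w wL; apply: H; rewrite ltnS ltnW.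
have [M2 H2] := H L (ltnSn L).
exists (maxn M1 M2) => w; rewrite ltnS leq_eqVlt => /orP[/eqP ->|wL].
  by apply: Qm H2; rewrite leq_maxr.
by apply: Qm (H1 w wL); rewrite leq_maxl.
Qed.

Lemma zero_path (R : realType) (P : nat -> nat -> R) y s z :
  path (fun a b => 0 < P a b) z s -> last z s = y ->
  (exists t, [/\ all (fun v => v != 0%N) t, path (fun a b => 0 < P a b) z t & last z t = y]) \/
  (exists t, [/\ all (fun v => v != 0%N) t, path (fun a b => 0 < P a b) 0%N t & last 0%N t = y]).
Proof.
elim: s z => [|w s IH] z /=.
  by move=> _ <-; left; exists [::].
move=> /andP[Pzw pw] lw; have [[t [alt pt lt]]|] := IH w pw lw; last by right.
case: (eqVneq w 0%N) => [w0|wn0].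
  by right; exists t; split => //; rewrite -w0.
by left; exists (w :: t); split => /=; rewrite ?wn0 ?alt ?Pzw ?pt.
Qed.

Section Main.
Variable R : realType.
Variable P : nat -> nat -> R.
Variable pi : nat -> R.
Hypothesis P0 : forall x y, 0 <= P x y.
Hypothesis Prow : forall x N, \sum_(0 <= w < N) P x w <= 1.
Hypothesis pistat : forall w N, \sum_(0 <= z < N) pi z * P z w <= pi w.
Hypothesis pipos : forall x, 0 < pi x.
Hypothesis pisum : forall N, \sum_(0 <= z < N) pi z <= 1.
Hypothesis mono : monotone_kernel P.
Hypothesis irr : irreducible P.
Hypothesis Hfr : series (fun k => first_return P 0 k) @ \oo --> (1:R).

Lemma Kf_ge0 N n z a : 0 <= Kf P N n z a.
Proof.
elim: n z => [|n IH] z /=; first by case: ifP.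
case: ifP => // _; apply: sumr_ge0 => w _; exact: mulr_ge0.
Qed.

Lemma Kf_outz N n z a : (N <= z)%N -> Kf P N n z a = 0.
Proof. by case: n => [|n] /= zN; rewrite leqNgt in zN; rewrite (negbTE zN). Qed.

Lemma Kf_killed N n z a : pi z * Kf P N n z a =
  pi a * killed (reversed_kernel P pi) N n a z.
Proof.
elim: n z => [|n IH] z /=.
  case: (eqVneq a z) => [->|az]; first by [].
  by rewrite !andbF !mulr0.
case: ifP => zN; last by rewrite !mulr0.
rewrite mulr_sumr mulr_sumr; apply: eq_bigr => w _.
have piw := pipos w; have pia := pipos a.
have -> : killed (reversed_kernel P pi) N n a w = pi w * Kf P N n w a / pi a.
  by rewrite IH mulrAC divff ?mul1r // gt_eqF.
rewrite /reversed_kernel; field.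
by rewrite !gt_eqF.
Qed.

Lemma G_ge0 N n k z : 0 <= G P N n k z.
Proof. by apply: sumr_ge0 => a _; apply: Kf_ge0. Qed.

Lemma G_succ N n k z : G P N n.+1 k z =
  if (z < N)%N then \sum_(0 <= w < N) P z w * G P N n k w else 0.
Proof.
rewrite /G /=; case: ifP => _; last by rewrite big1.
by rewrite exchange_big; apply: eq_bigr => w _; rewrite mulr_sumr.
Qed.

Lemma sum_ind (b : bool) z k : \sum_(0 <= a < k) (if b && (a == z) then 1 else 0 : R)
  = if b && (z < k)%N then 1 else 0.
Proof.
case: b => /=; last by rewrite big1.
elim: k => [|k IH]; first by rewrite big_geq.
rewrite big_nat_recr //= IH.
case: (ltngtP k z) => [kz|zk|->].
- have -> : (z < k.+1)%N = false by lia.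
  by rewrite addr0.
- have -> : (z < k.+1)%N = true by lia.
  by rewrite addr0.
- by rewrite ltnSn add0r.
Qed.

Lemma G_decr N n k z1 z2 : (z1 <= z2)%N -> G P N n k z2 <= G P N n k z1.
Proof.
elim: n z1 z2 => [|n IH] z1 z2 z12.
  rewrite /G /= !sum_ind.
  case: ifP => [/andP[z2N z2k]|_]; last by case: ifP.
  by rewrite (leq_ltn_trans z12 z2N) (leq_ltn_trans z12 z2k).
rewrite !G_succ; case: (ltnP z2 N) => z2N; last first.
  case: ifP => _ //; apply: sumr_ge0 => w _; apply: mulr_ge0 => //; exact: G_ge0.
rewrite (leq_ltn_trans z12 z2N).
case: N IH z2N => [//|N'] IH _.
apply: abel_le.
- by move=> w _; apply: mono.
- by move=> w _; apply: IH.
- exact: G_ge0.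
Qed.

Lemma A_decr N n k : G P N n.+1 k 0 <= G P N n k 0.
Proof.
rewrite G_succ; case: ifP => _; last exact: G_ge0.
apply: (@le_trans _ _ (\sum_(0 <= w < N) P 0%N w * G P N n k 0)).
  by apply: ler_sum => w _; apply: ler_wpM2l => //; apply: G_decr.
by rewrite -mulr_suml ler_piMl ?G_ge0.
Qed.

Lemma V_ge0 N m z : 0 <= V P N m z.
Proof.
elim: m z => [|m IH] z /=; first by case: ifP.
case: ifP => // _; case: ifP => // _; apply: sumr_ge0 => w _; exact: mulr_ge0.
Qed.

Lemma V_le1 N m z : V P N m z <= 1.
Proof.
elim: m z => [|m IH] z /=; first by case: ifP.
case: ifP => // _; case: ifP => // _.
apply: le_trans (Prow z N); apply: ler_sum => w _.
by rewrite ler_piMr // V_ge0.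
Qed.

Lemma G_ge_AV N n k y : G P N n k 0 * V P N n y <= G P N n k y.
Proof.
elim: n y => [|n IH] y.
  rewrite /=; case: (eqVneq y 0%N) => [->|_]; first by rewrite mulr1.
  by rewrite mulr0 G_ge0.
rewrite /=; case: (eqVneq y 0%N) => [->|_]; first by rewrite mulr1.
case: ifP => yN; last by rewrite mulr0 G_ge0.
rewrite [G P N n.+1 k y]G_succ yN mulr_sumr; apply: ler_sum => w _.
rewrite mulrCA; apply: ler_wpM2l => //.
apply: le_trans (IH w); apply: ler_wpM2r; first exact: V_ge0.
exact: A_decr.
Qed.

Lemma D_eq N n k : \sum_(0 <= a < k) E P pi N n a = \sum_(0 <= z < N) pi z * G P N n k z.
Proof.
rewrite /E /G exchange_big; apply: eq_bigr => z _; by rewrite mulr_sumr.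
Qed.

Lemma E_ge0 N n a : 0 <= E P pi N n a.
Proof. apply: sumr_ge0 => z _; apply: mulr_ge0; [exact: ltW|exact: Kf_ge0]. Qed.

Lemma E_decr N n a : E P pi N n.+1 a <= E P pi N n a.
Proof.
rewrite /E /=.
rewrite (eq_big_nat _ _ (F2 := fun z => \sum_(0 <= w < N) pi z * P z w * Kf P N n w a)); last first.
  by move=> z /andP[_ ->]; rewrite mulr_sumr; apply: eq_bigr => w _; rewrite mulrA.
rewrite exchange_big /=; apply: ler_sum => w _.
rewrite -mulr_suml; apply: ler_wpM2r; [exact: Kf_ge0|exact: pistat].
Qed.

Lemma E_mono N m n a : (m <= n)%N -> E P pi N n a <= E P pi N m a.
Proof.
elim: n => [|n IH]; first by rewrite leqn0 => /eqP ->.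
rewrite leq_eqVlt => /orP[/eqP ->//|]; rewrite ltnS => /IH.
by apply: le_trans; apply: E_decr.
Qed.

Lemma Kf_CK N n j z a x : Kf P N n z a * Kf P N j a x <= Kf P N (n + j) z x.
Proof.
elim: n z => [|n IH] z /=.
  case: ifP => [/andP[_ /eqP ->]|_]; first by rewrite mul1r.
  by rewrite mul0r Kf_ge0.
case: ifP => zN; last by rewrite mul0r.
rewrite mulr_suml; apply: ler_sum => w _; rewrite -mulrA.
by apply: ler_wpM2l => //; apply: IH.
Qed.

Lemma Kf_path s a : path (fun u v => 0 < P u v) a s ->
  exists2 c, 0 < c & forall N, all (fun v => (v < N)%N) (a :: s) ->
    c <= Kf P N (size s) a (last a s).
Proof.
elim: s a => [|w s IH] a /=.
  by move=> _; exists 1 => // N /andP[-> _]; rewrite eqxx.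
move=> /andP[Paw /IH [c c0 Hc]]; exists (P a w * c); first exact: mulr_gt0.
move=> N /andP[aN /andP[wN Hs]]; rewrite aN.
have F0 : forall v, 0 <= P a v * Kf P N (size s) v (last w s).
  by move=> v; apply: mulr_ge0 => //; exact: Kf_ge0.
apply: (le_trans _ (@sum_ge_term _ _ _ _ F0 wN)) => /=.
apply: ler_wpM2l; first exact: ltW.
by apply: Hc; rewrite /= wN.
Qed.

Lemma E_comp a x : exists2 c, 0 < c & exists M, forall n N, (M <= n)%N -> (M <= N)%N ->
  c * E P pi N n a <= E P pi N n x.
Proof.
have [s [ps ls]] := irr a x.
have [c c0 Hc] := @Kf_path s a ps.
exists c => //; exists (maxn (size s) (foldr maxn 0 (a :: s)).+1) => n N.
rewrite !geq_max => /andP[jn _] /andP[_ HN].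
have Hall := @all_lt_max _ _ HN.
have Hk := Hc N Hall; rewrite ls in Hk.
apply: (@le_trans _ _ (c * E P pi N (n - size s) a)).
  by apply: ler_wpM2l; [exact: ltW|apply: E_mono; rewrite leq_subr].
rewrite /E mulr_sumr; apply: ler_sum => z _.
rewrite mulrCA; apply: ler_wpM2l; first exact: ltW.
apply: le_trans (_ : Kf P N (n - size s) z a * Kf P N (size s) a x <= _).
  by rewrite mulrC; apply: ler_wpM2l => //; exact: Kf_ge0.
by have := Kf_CK N (n - size s) (size s) z a x; rewrite subnK.
Qed.

Lemma P_le1 x y : P x y <= 1.
Proof.
apply: le_trans (Prow x y.+1).
by apply: (@sum_ge_term _ (fun w => P x w)) => //.
Qed.

Lemma sum_ind0 N (f : nat -> R) :
  \sum_(0 <= w < N) f w * (if w == 0%N then 1 else 0) = if (0 < N)%N then f 0%N else 0.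
Proof.
case: N => [|N]; first by rewrite big_geq.
rewrite big_nat_recl //= mulr1 big1 ?addr0 // => w _; by rewrite mulr0.
Qed.

Lemma tk_S N mu k z : tk P N mu k.+1 z =
  if (z < N)%N then \sum_(0 <= w < N) (if w == 0%N then 0 else tk P N mu k w * P w z) else 0.
Proof. by []. Qed.

Lemma tk_shift N mu k z : tk P N mu k.+1 z =
  tk P N (fun z => \sum_(0 <= w < N) (if w == 0%N then 0 else mu w * P w z)) k z.
Proof.
elim: k z => [|k IH] z.
  rewrite /=; case: ifP => // _; apply: eq_big_nat => w /andP[_ wN].
  by rewrite wN.
rewrite tk_S [in RHS]tk_S.
case: ifP => // _; apply: eq_bigr => w _; by rewrite IH.
Qed.

Lemma tk_V m N mu : \sum_(0 <= k < m.+1) tk P N mu k 0%N =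
  \sum_(0 <= w < N) mu w * V P N m w.
Proof.
elim: m mu => [|m IH] mu.
  by rewrite big_nat1 /= sum_ind0.
rewrite big_nat_recl //.
under eq_bigr do rewrite tk_shift.
rewrite IH.
transitivity (\sum_(0 <= w < N) mu w * (if w == 0%N then 1 else 0) +
  \sum_(0 <= w < N) (if w == 0%N then 0 else mu w * W P N m w)).
  rewrite sum_ind0; congr (_ + _).
  under eq_bigr do rewrite mulr_suml.
  rewrite exchange_big /=; apply: eq_bigr => w _.
  case: (eqVneq w 0%N) => _; first by rewrite big1 // => z _; rewrite mul0r.
  by rewrite /W mulr_sumr; apply: eq_bigr => z _; rewrite mulrA.
rewrite -big_split /=; apply: eq_big_nat => w /andP[_ wN].
case: (eqVneq w 0%N) => [->|wn]; first by rewrite mulr1 addr0.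
by rewrite mulr0 add0r wN.
Qed.

Lemma W_ge0 N m z : 0 <= W P N m z.
Proof. apply: sumr_ge0 => w _; apply: mulr_ge0 => //; exact: V_ge0. Qed.

Lemma W_le1 N m z : W P N m z <= 1.
Proof.
apply: le_trans (Prow z N); apply: ler_sum => w _.
by rewrite ler_piMr // V_le1.
Qed.

Lemma Dstep N m z w : w != 0%N -> (w < N)%N ->
  P z w * (1 - W P N m w) <= 1 - W P N m.+1 z.
Proof.
move=> w0 wN.
apply: (@le_trans _ _ (\sum_(0 <= v < N) P z v * (1 - V P N m.+1 v))).
  have F0 : forall v, 0 <= P z v * (1 - V P N m.+1 v).
    by move=> v; apply: mulr_ge0 => //; rewrite subr_ge0 V_le1.
  apply: le_trans (@sum_ge_term _ _ _ _ F0 wN).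
  by rewrite /= (negbTE w0) wN.
under eq_bigr do rewrite mulrBr mulr1.
by rewrite sumrB lerB // Prow.
Qed.

Lemma Dpath t z : all (fun v => v != 0%N) t -> path (fun a b => 0 < P a b) z t ->
  exists2 c, 0 < c & forall m N, all (fun v => (v < N)%N) t ->
    c * (1 - W P N m (last z t)) <= 1 - W P N (m + size t) z.
Proof.
elim: t z => [|w t IH] z /=.
  by move=> _ _; exists 1 => // m N _; rewrite mul1r addn0.
move=> /andP[w0 alt] /andP[Pzw pt]; have [c c0 Hc] := IH w alt pt.
exists (P z w * c); first exact: mulr_gt0.
move=> m N /andP[wN Ht]; rewrite addnS.
apply: (le_trans _ (@Dstep N (m + size t) z w w0 wN)).
rewrite -mulrA; apply: ler_wpM2l => //; exact: Hc.
Qed.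

Lemma tab_bound k w : 0 <= taboo P 0 k w /\ taboo P 0 k w <= pi w / pi 0%N.
Proof.
elim: k w => [|k IH] w /=.
  split => //; rewrite ler_pdivlMr // mulrC.
  apply: le_trans (pistat w 1); by rewrite big_nat1.
set f := fun v => _.
have f0 : forall v, 0 <= f v.
  by move=> v; rewrite /f; case: ifP => // _; apply: mulr_ge0 => //; case: (IH v).
have nd : nondecreasing_seq (series f).
  by apply/nondecreasing_seqP => m; rewrite /series /= big_nat_recr //= lerDl.
have ub : forall n, series f n <= pi w / pi 0%N.
  move=> n; rewrite /series /=.
  apply: (@le_trans _ _ (\sum_(0 <= v < n) pi v * P v w / pi 0%N)).
    apply: ler_sum => v _; rewrite /f; case: ifP => _.
      by apply: divr_ge0; [apply: mulr_ge0 => //; exact: ltW|exact: ltW].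
    by rewrite mulrAC; apply: ler_wpM2r => //; case: (IH v).
  by rewrite -mulr_suml ler_pM2r ?invr_gt0 //.
have cv : cvgn (series f).
  by apply: nondecreasing_is_cvgn => //; exists (pi w / pi 0%N) => _ [n _ <-].
split.
  by apply: le_trans (nondecreasing_cvgn_le nd cv 0%N); rewrite /series /= big_geq.
by apply: limr_le => //; apply: nearW.
Qed.

Lemma tab_cvg k w : series (fun v => if v == 0%N then 0 else taboo P 0 k v * P v w)
  @ \oo --> taboo P 0 k.+1 w.
Proof.
set f := fun v => _.
have f0 : forall v, 0 <= f v.
  by move=> v; rewrite /f; case: ifP => // _; apply: mulr_ge0 => //; case: (tab_bound k v).
have nd : nondecreasing_seq (series f).
  by apply/nondecreasing_seqP => m; rewrite /series /= big_nat_recr //= lerDl.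
have ub : forall n, series f n <= pi w / pi 0%N.
  move=> n; rewrite /series /=.
  apply: (@le_trans _ _ (\sum_(0 <= v < n) pi v * P v w / pi 0%N)).
    apply: ler_sum => v _; rewrite /f; case: ifP => _.
      by apply: divr_ge0; [apply: mulr_ge0 => //; exact: ltW|exact: ltW].
    by rewrite mulrAC; apply: ler_wpM2r => //; case: (tab_bound k v).
  by rewrite -mulr_suml ler_pM2r ?invr_gt0 //.
have cv : cvgn (series f).
  by apply: nondecreasing_is_cvgn => //; exists (pi w / pi 0%N) => _ [n _ <-].
exact: cv.
Qed.
Hypothesis Hpi : series pi @ \oo --> (1:R).

Lemma sum_ge_term_in (F : nat -> R) N i : (forall j, (j < N)%N -> 0 <= F j) -> (i < N)%N ->
  F i <= \sum_(0 <= j < N) F j.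
Proof.
move=> F0 iN.
have -> : \sum_(0 <= j < N) F j = \sum_(0 <= j < N) (if (j < N)%N then F j else 0).
  by apply: eq_big_nat => j /andP[_ ->].
have h : forall j, 0 <= (fun j => if (j < N)%N then F j else 0) j.
  by move=> j /=; case: ifP => // /F0.
have := @sum_ge_term _ (fun j => if (j < N)%N then F j else 0) N i h iN.
by rewrite /= iN.
Qed.

Lemma tk_ge0 N k z : 0 <= tk P N (P 0%N) k z.
Proof.
elim: k z => [|k IH] z /=; first by case: ifP.
case: ifP => // _; apply: sumr_ge0 => w _; case: ifP => // _; exact: mulr_ge0.
Qed.

Lemma tk_approx k : forall z eps, 0 < eps -> exists N0, forall N, (N0 <= N)%N ->
  taboo P 0 k z - eps <= tk P N (P 0%N) k z.
Proof.
elim: k => [|k IH] z eps e0.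
  exists z.+1 => N zN /=; case: ifP => [_|]; [lra|by rewrite zN].
have cv := tab_cvg k z.
have e2 : 0 < eps / 2 by lra.
have [L HL] := @ser_ge _ _ _ _ cv e2.
set e' := eps / 2 / L.+1%:R.
have e'0 : 0 < e' by rewrite /e' divr_gt0 // ltr0n.
have [N1 HN1] := @fin_common (fun w M => forall N, (M <= N)%N ->
   taboo P 0 k w - e' <= tk P N (P 0%N) k w) L
   (fun w M M' MM' H N MN => H N (leq_trans MM' MN))
   (fun w _ => IH w e' e'0).
exists (maxn N1 (maxn L z.+1)) => N.
rewrite !geq_max => /and3P[N1N LN zN].
rewrite tk_S zN.
apply: (@le_trans _ _ (\sum_(0 <= w < L) (if w == 0%N then 0 else tk P N (P 0%N) k w * P w z))); last first.
  apply: sum_le_ext => // w; case: ifP => // _; apply: mulr_ge0 => //; exact: tk_ge0.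
apply: (@le_trans _ _ (\sum_(0 <= w < L) ((if w == 0%N then 0 else taboo P 0 k w * P w z) - e'))); last first.
  apply: ler_sum_nat => w /andP[_ wL]; case: ifP => _; first lra.
  have h1 := HN1 w wL N N1N.
  have h2 := P_le1 w z; have h3 := P0 w z.
  have h4 : 0 <= taboo P 0 k w by case: (tab_bound k w).
  nra.
rewrite sumrB sumr_const_nat subn0.
have : e' *+ L <= eps / 2.
  rewrite -mulr_natr /e' -mulrA ler_piMr //; first lra.
  by rewrite ler_pdivrMl ?ltr0n // mulr1 ler_nat.
move: HL; rewrite /series /=; lra.
Qed.

Lemma Rlow eps : 0 < eps -> exists M, forall m N, (M <= m)%N -> (M <= N)%N ->
  1 - eps <= W P N m 0%N.
Proof.
move=> e0; have e2 : 0 < eps / 2 by lra.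
have [K HK] := @ser_ge _ _ _ _ Hfr e2.
set e' := eps / 2 / K.+1%:R.
have e'0 : 0 < e' by rewrite /e' divr_gt0 // ltr0n.
have [N1 HN1] := @fin_common (fun w M => forall N, (M <= N)%N ->
   taboo P 0 w 0 - e' <= tk P N (P 0%N) w 0) K
   (fun w M M' MM' H N MN => H N (leq_trans MM' MN))
   (fun w _ => tk_approx w 0 e' e'0).
exists (maxn K N1) => m N; rewrite !geq_max => /andP[Km _] /andP[_ N1N].
rewrite /W -tk_V.
apply: (@le_trans _ _ (\sum_(0 <= k < K) tk P N (P 0%N) k 0)); last first.
  by apply: sum_le_ext => // [k|]; [exact: tk_ge0|apply: leq_trans Km _].
apply: (@le_trans _ _ (\sum_(0 <= k < K) (taboo P 0 k 0 - e'))); last first.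
  by apply: ler_sum_nat => k /andP[_ kK]; apply: HN1.
rewrite sumrB sumr_const_nat subn0.
have : e' *+ K <= eps / 2.
  rewrite -mulr_natr /e' -mulrA ler_piMr //; first lra.
  by rewrite ler_pdivrMl ?ltr0n // mulr1 ler_nat.
move: HK; rewrite /series /first_return /=; lra.
Qed.

Lemma last_edge y s z : path (fun a b => 0 < P a b) z s -> last z s = y -> z != y ->
  exists w, 0 < P w y.
Proof.
elim: s z => [|w s IH] z /=; first by move=> _ ->; rewrite eqxx.
move=> /andP[Pzw pw] lw zy; case: (eqVneq w y) => [wy|wy].
  by exists z; rewrite -wy.
exact: IH pw lw wy.
Qed.

Lemma P00 : 0 < P 0%N 0%N.
Proof.
have [s [ps ls]] := irr 1 0.
have [w Pw] := @last_edge 0 s 1 ps ls isT.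
have := mono 0 0 w (leq0n w); rewrite !big_nat1 => h.
exact: lt_le_trans h.
Qed.

Lemma Vrec y dl : 0 < dl -> exists M, forall n N, (M <= n)%N -> (M <= N)%N ->
  1 - dl <= V P N n y.
Proof.
move=> d0; case: (eqVneq y 0%N) => [->|yn].
  by exists 0%N => n N _ _; case: n => [|n] /=; lra.
have [s [ps ls]] := irr 0 y.
have [t [alt pt lt]] : exists t, [/\ all (fun v => v != 0%N) t,
    path (fun a b => 0 < P a b) 0%N t & last 0%N t = y].
  by case: (@zero_path _ _ y s 0 ps ls).
have [c c0 Hc] := @Dpath t 0 alt pt.
have [M0 HM0] := Rlow (c * dl) (mulr_gt0 c0 d0).
exists (maxn M0.+1 (maxn (foldr maxn 0 t).+1 y.+1)) => n N.
rewrite !geq_max => /andP[Mn _] /and3P[M0N tN yN].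
case: n Mn => [//|m] Mn.
have h1 := Hc m N (@all_lt_max _ _ tN).
have h2 := HM0 (m + size t) N (leq_trans Mn (leq_addr _ _)) (ltnW M0N).
rewrite lt in h1.
have -> : V P N m.+1 y = W P N m y by rewrite /= (negbTE yn) yN.
have : c * (1 - W P N m y) <= c * dl by lra.
rewrite ler_pM2l //; lra.
Qed.
Lemma pi_le1 y : pi y <= 1.
Proof.
apply: le_trans (pisum y.+1); apply: (@sum_ge_term _ pi) => // j; exact: ltW.
Qed.

Lemma Mbound k y dl : 0 < dl -> exists M, forall n N, (M <= n)%N -> (M <= N)%N ->
  `| pi y * G P N n k y - pi y * \sum_(0 <= z < N) pi z * G P N n k z |
    <= dl * \sum_(0 <= z < N) pi z * G P N n k z.
Proof.
move=> d0.
set d := Num.min dl 1.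
have dd : d <= dl by rewrite /d ge_min lexx.
have d1 : d <= 1 by rewrite /d ge_min lexx orbT.
have dpos : 0 < d by rewrite /d lt_min d0 ltr01.
set d' := d / 2.
have d'0 : 0 < d' by rewrite /d'; lra.
have d'1 : d' <= 1 / 2 by rewrite /d'; lra.
have d'd : d' * 2 = d by rewrite /d'; field.
have [L0 HL0] := @ser_ge _ _ _ _ Hpi d'0.
set L := maxn L0 y.+1.
have [M1 HM1] := @fin_common (fun y' M => forall n N, (M <= n)%N -> (M <= N)%N ->
   1 - d' <= V P N n y') L
   (fun w M M' MM' H n N Mn MN => H n N (leq_trans MM' Mn) (leq_trans MM' MN))
   (fun y' _ => Vrec y' d' d'0).
exists (maxn M1 L) => n N; rewrite geq_max => /andP[M1n Ln]; rewrite geq_max => /andP[M1N LN].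
set A := G P N n k 0.
set D := \sum_(0 <= z < N) pi z * G P N n k z.
have A0 : 0 <= A by exact: G_ge0.
have piy := pi_le1 y; have piy0 := ltW (pipos y).
have DA : D <= A.
  apply: (@le_trans _ _ (\sum_(0 <= z < N) pi z * A)).
    by apply: ler_sum => z _; apply: ler_wpM2l; [exact: ltW|exact: G_decr].
  by rewrite -mulr_suml ler_piMl.
have D0 : 0 <= D by apply: sumr_ge0 => z _; apply: mulr_ge0; [exact: ltW|exact: G_ge0].
have low : forall y', (y' < L)%N -> 0 <= pi y' * G P N n k y' - ((1 - d') * D) * pi y'.
  move=> y' y'L.
  have hV := HM1 y' y'L n N M1n M1N.
  have h1 : A * (1 - d') <= G P N n k y'.
    exact: le_trans (ler_wpM2l A0 hV) (G_ge_AV _ _ _ _).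
  have h2 : D * (1 - d') <= A * (1 - d') by apply: ler_wpM2r => //; lra.
  have h3 : pi y' * (D * (1 - d')) <= pi y' * G P N n k y'.
    by apply: ler_wpM2l; [exact: ltW|exact: le_trans h2 h1].
  rewrite subr_ge0.
  have -> : (1 - d') * D * pi y' = pi y' * (D * (1 - d')) by ring.
  exact: h3.
have yL : (y < L)%N by rewrite /L leq_max ltnSn orbT.
have hu := @sum_ge_term_in (fun y' => pi y' * G P N n k y' - (1 - d') * D * pi y') L y low yL.
rewrite sumrB -mulr_sumr in hu.
have hS1 : \sum_(0 <= i < L) pi i * G P N n k i <= D.
  apply: sum_le_ext => // j; apply: mulr_ge0; [exact: ltW|exact: G_ge0].
have hS2 : 1 - d' <= \sum_(0 <= i < L) pi i.
  apply: le_trans (ltW HL0) _; apply: sum_le_ext; [move=> j; exact: ltW|exact: leq_maxl].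
have hy := low y yL.
have hprod : (1 - d') * D * (1 - d') <= (1 - d') * D * \sum_(0 <= i < L) pi i.
  apply: ler_wpM2l => //; apply: mulr_ge0 => //; lra.
rewrite ler_norml; apply/andP; split.
  have : d' * D * pi y <= d' * D by rewrite ler_piMr //; apply: mulr_ge0 => //; lra.
  have : d' * D <= dl * D by apply: ler_wpM2r => //; lra.
  move: hy; set g := pi y * G P N n k y; lra.
have : d' * D * d' >= 0 by apply: mulr_ge0 => //; apply: mulr_ge0 => //; lra.
have : d' * D * pi y >= 0 by apply: mulr_ge0 => //; apply: mulr_ge0 => //; lra.
have : d * D <= dl * D by apply: ler_wpM2r => //; lra.
move: hu hS1 hprod; set g := pi y * G P N n k y; set S := \sum_(0 <= i < L) pi i.
set S' := \sum_(0 <= i < L) _.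
rewrite /d'; nra.
Qed.
Lemma Kf00 N n : (0 < N)%N -> P 0%N 0%N ^+ n <= Kf P N n 0 0.
Proof.
move=> N0; elim: n => [|n IH] /=; first by rewrite N0 expr0.
rewrite N0 exprS.
have F0 : forall w, 0 <= P 0%N w * Kf P N n w 0.
  by move=> w; apply: mulr_ge0 => //; exact: Kf_ge0.
apply: (le_trans _ (@sum_ge_term _ _ _ _ F0 N0)).
by apply: ler_wpM2l.
Qed.

Lemma E0pos N n : (0 < N)%N -> 0 < E P pi N n 0.
Proof.
move=> N0.
have F0 : forall z, 0 <= pi z * Kf P N n z 0.
  by move=> z; apply: mulr_ge0; [exact: ltW|exact: Kf_ge0].
apply: (lt_le_trans _ (@sum_ge_term _ _ _ _ F0 N0)).
apply: mulr_gt0; first exact: pipos.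
apply: (lt_le_trans _ (Kf00 N n N0)).
exact: exprn_gt0 P00.
Qed.

Lemma Ecomm x K : exists2 c, 0 < c & exists M, forall n N, (M <= n)%N -> (M <= N)%N ->
  forall a, (a < K)%N -> c * E P pi N n a <= E P pi N n x.
Proof.
elim: K => [|K [c1 c10 [M1 H1]]]; first by exists 1 => //; exists 0%N.
have [c2 c20 [M2 H2]] := E_comp K x.
exists (Num.min c1 c2); first by rewrite lt_min c10 c20.
exists (maxn M1 M2) => n N; rewrite geq_max => /andP[M1n M2n];
  rewrite geq_max => /andP[M1N M2N] a.
rewrite ltnS leq_eqVlt => /orP[/eqP ->|aK].
  apply: (le_trans _ (H2 n N M2n M2N)); apply: ler_wpM2r; first exact: E_ge0.
  by rewrite ge_min lexx orbT.
apply: (le_trans _ (H1 n N M1n M1N a aK)); apply: ler_wpM2r; first exact: E_ge0.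
by rewrite ge_min lexx.
Qed.

Lemma condE N n x y : 0 < E P pi N n x ->
  cond_killed (reversed_kernel P pi) N n x y = pi y * Kf P N n y x / E P pi N n x.
Proof.
move=> E0.
have kE : forall z, killed (reversed_kernel P pi) N n x z = pi z * Kf P N n z x / pi x.
  move=> z; rewrite Kf_killed mulrC mulrA mulVf ?mul1r //; exact: lt0r_neq0.
rewrite /cond_killed kE.
under eq_bigr do rewrite kE.
rewrite -mulr_suml -/(E P pi N n x).
have := lt0r_neq0 (pipos x); have := lt0r_neq0 E0; move=> h1 h2.
by field; apply/andP.
Qed.

Lemma main_sec x y eps : 0 < eps -> exists M, forall n N, (M <= n)%N -> (M <= N)%N ->
  `| cond_killed (reversed_kernel P pi) N n x y - pi y | < eps.
Proof.
move=> e0.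
have [c c0 [M1 H1]] := Ecomm x x.+1.
set C := x.+1%:R / c.
have C0 : 0 < C by rewrite /C divr_gt0 // ltr0n.
set dl := eps / 4 / C.
have dl0 : 0 < dl by rewrite /dl divr_gt0 //; lra.
have [M2 H2] := Mbound x.+1 y dl dl0.
have [M3 H3] := Mbound x y dl dl0.
exists (maxn (maxn M1 M2) (maxn M3 1)) => n N.
rewrite !geq_max => /andP[/andP[M1n M2n] /andP[M3n _]] /andP[/andP[M1N M2N] /andP[M3N N0]].
have Ex0 : 0 < E P pi N n x.
  apply: (lt_le_trans _ (H1 n N M1n M1N 0%N (ltn0Sn x))).
  by apply: mulr_gt0 => //; apply: E0pos.
rewrite condE //.
set D1 := \sum_(0 <= z < N) pi z * G P N n x.+1 z.
set D0 := \sum_(0 <= z < N) pi z * G P N n x z.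
have hD1 : D1 = \sum_(0 <= a < x.+1) E P pi N n a by rewrite D_eq.
have hD0 : D0 = \sum_(0 <= a < x) E P pi N n a by rewrite D_eq.
have hE : E P pi N n x = D1 - D0 by rewrite hD1 hD0 big_nat_recr //=; ring.
have hK : Kf P N n y x = G P N n x.+1 y - G P N n x y by rewrite /G big_nat_recr //=; ring.
have D00 : 0 <= D0 by rewrite hD0; apply: sumr_ge0 => a _; exact: E_ge0.
have hDC : D1 <= C * E P pi N n x.
  rewrite hD1.
  apply: (@le_trans _ _ (\sum_(0 <= a < x.+1) (E P pi N n x / c))).
    apply: ler_sum_nat => a /andP[_ ax]; rewrite ler_pdivlMr // mulrC.
    exact: H1 n N M1n M1N a ax.
  rewrite sumr_const_nat subn0 -mulr_natr /C le_eqVlt; apply/orP; left; apply/eqP.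
  field; exact: lt0r_neq0.
have h2 := H2 n N M2n M2N; have h3 := H3 n N M3n M3N.
rewrite -/D1 in h2; rewrite -/D0 in h3.
set g1 := pi y * G P N n x.+1 y in h2; set g0 := pi y * G P N n x y in h3.
have -> : pi y * Kf P N n y x / E P pi N n x - pi y =
   ((g1 - pi y * D1) - (g0 - pi y * D0)) / E P pi N n x.
  rewrite hK /g1 /g0 hE; field; rewrite -hE; exact: lt0r_neq0.
rewrite normrM normfV (gtr0_norm Ex0) ltr_pdivrMr //.
have hdC : dl * C = eps / 4 by rewrite /dl; field; exact: lt0r_neq0.
have hD01 : D0 <= D1 by rewrite hD1 hD0 big_nat_recr //= lerDl E_ge0.
apply: (le_lt_trans (ler_normB _ _)).
have : dl * D1 <= dl * (C * E P pi N n x) by apply: ler_wpM2l => //; exact: ltW.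
have : dl * D0 <= dl * D1 by apply: ler_wpM2l => //; exact: ltW.
rewrite mulrA hdC; move: h2 h3.
set a1 := `|g1 - pi y * D1|; set a0 := `|g0 - pi y * D0|.
move: Ex0; set EE := E P pi N n x => E0 h1 h0 h01 h1C.
have hpos : 0 < eps * EE by apply: mulr_gt0.
have e4 : eps / 4 * EE = (eps * EE) / 4 by ring.
rewrite e4 in h1C.
move: hpos h1C; set q := eps * EE; lra.
Qed.
End Main.

Theorem proposition2 (R : realType) (P : nat -> nat -> R) (pi : nat -> R) :
  stochastic P -> monotone_kernel P -> irreducible P -> positive_recurrent P ->
  stationary_distribution P pi -> (forall x, 0 < pi x) ->
  forall x y : nat, forall eps : R, 0 < eps ->
    exists M : nat, forall n N : nat, (M <= n)%N -> (M <= N)%N ->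
      `| cond_killed (reversed_kernel P pi) N n x y - pi y | < eps.
Proof.
move=> [P0 Prow] mono irr pr [pi0 [Hpi Hstat]] pipos x y eps e0.
have Prow' : forall z N, \sum_(0 <= w < N) P z w <= 1.
  by move=> z N; have := @ser_le _ _ _ (P0 z) (Prow z) N.
have pistat : forall w N, \sum_(0 <= z < N) pi z * P z w <= pi w.
  move=> w N; have := @ser_le _ _ _ _ (Hstat w) N; apply => z; apply: mulr_ge0 => //; exact: ltW.
have pisum : forall N, \sum_(0 <= z < N) pi z <= 1.
  by move=> N; have := @ser_le _ _ _ pi0 Hpi N.
have Hfr := (pr 0%N).1.
by apply: main_sec.
Qed.
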